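(* Let $n\ge 3$ and let $P(G(n))$ be the power graph of the gyrogroup $G(n)$ (defined in the context), with identity $e=0$. Then: (1) the detour eccentricity satisfies $ec_D(u)=2^{n-1}$ if $u\in P(n)\setminus\{e\}$, $ec_D(e)=2^{n-1}-1$, and $ec_D(u)=2^{n-1}$ if $u\in H(n)$; (2) $rad_D(P(G(n)))=2^{n-1}-1$; (3) $dia_D(P(G(n)))=2^{n-1}$.
   Context: Let $n\ge 3$ be an integer and $m=2^{n-1}$. Let $P(n)=\{0,1,\dots,m-1\}$, $H(n)=\{m,m+1,\dots,2^n-1\}$ and $G(n)=P(n)\cup H(n)$. For $i,j\in G(n)$ let $t,s,k\in P(n)$ be the residues modulo $m$ (taken in $\{0,\dots,m-1\}$) of $i+j$, $i+(\frac m2-1)j$ and $(\frac m2+1)i+(\frac m2-1)j$, respectively, and define $i\oplus j=t$ if $i,j\in P(n)$; $i\oplus j=t+m$ if $i\in P(n),j\in H(n)$; $i\oplus j=s+m$ if $i\in H(n),j\in P(n)$; $i\oplus j=k$ if $i,j\in H(n)$. Then $(G(n),\oplus)$ is a gyrogroup with identity $e=0$. Powers are defined by $a^1=a$, $a^{k+1}=a^k\oplus a$. The power graph $P(G(n))$ is the simple undirected graph with vertex set $G(n)$ in which distinct vertices $u,v$ are adjacent if and only if $u^k=v$ or $v^k=u$ for some positive integer $k$. In a connected graph, the detour distance $d_D(u,v)$ is the length of a longest $u$–$v$ path; the detour eccentricity $ec_D(u)$ is $\max_v d_D(u,v)$; the detour radius $rad_D$ and detour diameter $dia_D$ are the minimum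 and maximum detour eccentricities over all vertices. *)

(* Defs.v *)
From mathcomp Require Import all_boot.
From mathcomp Require Import boolp.
Set Implicit Arguments. Unset Strict Implicit. Unset Printing Implicit Defensive.

Definition gm (n : nat) : nat := 2 ^ (n - 1).

Definition gop (n i j : nat) : nat :=
  let m := gm n in
  if i < m then
    (if j < m then (i + j) %% m else (i + j) %% m + m)
  else
    (if j < m then (i + (m %/ 2 - 1) * j) %% m + m
     else ((m %/ 2 + 1) * i + (m %/ 2 - 1) * j) %% m).

(* a^k with a^1 = a, a^(k+1) = a^k (+) a  (meaningful for k >= 1). *)
Definition gpow (n a k : nat) : nat := iter k.-1 (fun x => gop n x a) a.

Notation V n := 'I_(2 ^ n).

Definition padj (n : nat) (u v : V n) : bool :=
  (u != v) &&
  `[< exists k : nat, 0 < k /\ (gpow n u k = v \/ gpow n v k = u) >].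

(* there is a u--v path of length k (k edges, k+1 distinct vertices) *)
Definition has_path (n : nat) (u v : V n) (k : nat) : bool :=
  [exists t : k.-tuple (V n),
     [&& uniq (u :: val t), path (@padj n) u (val t) & last u (val t) == v]].

(* detour distance: length of a longest u--v path (a path has < 2^n edges) *)
Definition detour_dist (n : nat) (u v : V n) : nat :=
  \max_(k < 2 ^ n | has_path u v k) k.

Definition detour_ecc (n : nat) (u : V n) : nat :=
  \max_(v : V n) detour_dist u v.

Definition detour_rad (n : nat) : nat :=
  \big[minn/2 ^ n]_(u : V n) detour_ecc u.

Definition detour_diam (n : nat) : nat :=
  \max_(u : V n) detour_ecc u.

(* Main.v *)
Require Import Defs.
From mathcomp Require Import all_boot boolp zify.
Set Implicit Arguments. Unset Strict Implicit. Unset Printing Implicit Defensive.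

Lemma gm_def n : 2 <= n -> gm n = 2 * 2 ^ (n - 2).
Proof. move=> h; rewrite /gm -expnS; congr (_ ^ _); lia. Qed.

Lemma gm_ge4 n : 3 <= n -> 4 <= gm n.
Proof. move=> h; rewrite /gm (_ : 4 = 2 ^ 2) //; rewrite leq_exp2l //; lia. Qed.

Lemma two_n n : 1 <= n -> 2 ^ n = 2 * gm n.
Proof. move=> h; rewrite /gm -expnS; congr (_ ^ _); lia. Qed.

Lemma gpowP n u k : u < gm n -> gpow n u k.+1 = (k.+1 * u) %% gm n.
Proof.
move=> hu; rewrite /gpow /=; elim: k => [|k IH] /=; first by rewrite mul1n modn_small.
rewrite IH /gop ltn_pmod ?hu //; last by move: hu; case: (gm n).
by rewrite modnDml mulSn addnC.
Qed.

Lemma gpowH n u k : 3 <= n -> gm n <= u < 2 * gm n ->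
  gpow n u k.+1 = if odd k then 0 else u.
Proof.
move=> hn /andP[h1 h2]; rewrite /gpow /=; elim: k => [|k IH] //=.
rewrite IH; case: (odd k) => /=.
- rewrite /gop ifT; last by have := gm_ge4 hn; lia.
  rewrite ltnNge h1 /= add0n.
  have -> : u %% gm n = u - gm n.
    by rewrite -{1}(subnKC h1) modnDl modn_small //; lia.
  lia.
- rewrite /gop ltnNge h1 /=.
  rewrite (gm_def (ltnW hn)) mulKn // -mulnDl.
  have -> : (2 ^ (n - 2) + 1 + (2 ^ (n - 2) - 1)) = 2 * 2 ^ (n-2).
    have : 0 < 2 ^ (n-2) by rewrite expn_gt0.
    lia.
  by rewrite mulnC modnMl.
Qed.
Lemma cyc_step M a b : 0 < M -> gcdn a M %| b -> b < M ->
  exists k, 0 < k /\ (k * a) %% M = b.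
Proof.
move=> M0 hg hb.
case: (posnP a) hg => [->|a0] hg.
  exists 1; split => //; move: hg hb; rewrite gcd0n => /dvdnP[q ->].
  case: q => [|q] hb; first by rewrite !mul0n mod0n.
  by move: hb; rewrite mulSn; lia.
case: (egcdnP M a0) => km kn Hd _.
exists (km * (b %/ gcdn a M) + M); split; first by rewrite addn_gt0 M0 orbT.
set c := b %/ gcdn a M.
have Eb : b = c * gcdn a M by rewrite /c divnK.
have -> : (km * c + M) * a = (c * kn + a) * M + b.
  rewrite Eb mulnDl (mulnC km) -mulnA Hd; nia.
by rewrite modnMDl modn_small.
Qed.

Lemma cyc e a b : a < 2 ^ e -> b < 2 ^ e ->
  exists k, 0 < k /\ ((k * a) %% 2 ^ e = b \/ (k * b) %% 2 ^ e = a).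
Proof.
move=> ha hb.
have M0 : 0 < 2 ^ e by rewrite expn_gt0.
have /(@dvdn_pfactor 2 _ _ isT)[i _ Hi] : gcdn a (2 ^ e) %| 2 ^ e by apply: dvdn_gcdr.
have /(@dvdn_pfactor 2 _ _ isT)[j _ Hj] : gcdn b (2 ^ e) %| 2 ^ e by apply: dvdn_gcdr.
case: (leqP i j) => hij.
- have : gcdn a (2 ^ e) %| b.
    by rewrite Hi; apply: (dvdn_trans (dvdn_exp2l 2 hij)); rewrite -Hj dvdn_gcdl.
  case/(cyc_step M0)/(_ hb) => k [k0 hk]; exists k; split => //; by left.
- have : gcdn b (2 ^ e) %| a.
    by rewrite Hj; apply: (dvdn_trans (dvdn_exp2l 2 (ltnW hij))); rewrite -Hi dvdn_gcdl.
  case/(cyc_step M0)/(_ ha) => k [k0 hk]; exists k; split => //; by right.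
Qed.

Lemma ltV n (x : V n) : 1 <= n -> x < 2 * gm n.
Proof. move=> h; have := ltn_ord x; move: (x : nat) => y; by rewrite (two_n h). Qed.

Lemma gpowP' n u k : 0 < k -> u < gm n -> gpow n u k = (k * u) %% gm n.
Proof. by case: k => // k _; apply: gpowP. Qed.

Lemma gpow_lt n x k : x < gm n -> 0 < k -> gpow n x k < gm n.
Proof.
move=> hx; case: k => // k _; rewrite gpowP // ltn_pmod //.
by rewrite /gm expn_gt0.
Qed.

Lemma gpow_H n (x : V n) k : 3 <= n -> gm n <= x -> 0 < k ->
  gpow n x k = x \/ gpow n x k = 0.
Proof.
move=> hn hx; case: k => // k _; rewrite gpowH //; last first.
  by rewrite hx ltV //; lia.
by case: (odd k); [right|left].
Qed.

Lemma gpow_zero n (x : V n) : 3 <= n -> exists k, 0 < k /\ gpow n x k = 0.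
Proof.
move=> hn; case: (ltnP x (gm n)) => hx.
- have g4 := gm_ge4 hn.
  exists (gm n); split; first lia.
  have E : gm n = (gm n - 1).+1 by lia.
  by rewrite E gpowP // -E mulnC modnMl.
- exists 2; split => //; rewrite gpowH //.
  by rewrite hx ltV //; lia.
Qed.

Lemma padjE n (hn : 3 <= n) (u v : V n) : padj u v =
  (u != v) && [|| (u < gm n) && (v < gm n), val u == 0 | val v == 0].
Proof.
rewrite /padj; case: eqVneq => //= neq.
have g4 := gm_ge4 hn.
apply/asboolP/idP.
- case=> k [k0 [H|H]].
  + case: (ltnP u (gm n)) => hu.
    * have := gpow_lt hu k0; rewrite H => ->; done.
    * case: (gpow_H hn hu k0); rewrite H.
        by move/val_inj => E; rewrite E eqxx in neq.
      by move/eqP => X; rewrite X !orbT.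
  + case: (ltnP v (gm n)) => hv.
    * have := gpow_lt hv k0; rewrite H => ->; done.
    * case: (gpow_H hn hv k0); rewrite H.
        by move/val_inj => E; rewrite E eqxx in neq.
      by move/eqP => X; rewrite X orbT.
- case/or3P.
  + case/andP=> hu hv.
    have [k [k0 [H|H]]] := cyc hu hv.
    * exists k; split => //; left; by rewrite gpowP'.
    * exists k; split => //; right; by rewrite gpowP'.
  + move/eqP=> u0; have [k [k0 H]] := gpow_zero v hn.
    by exists k; split => //; right; rewrite H u0.
  + move/eqP=> v0; have [k [k0 H]] := gpow_zero u hn.
    by exists k; split => //; left; rewrite H v0.
Qed.

Lemma adjH n (hn : 3 <= n) (x y : V n) : padj x y -> gm n <= x -> val y = 0.
Proof.
rewrite padjE // => /andP[_ H] hx; have g4 := gm_ge4 hn.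
move: H; rewrite ltnNge hx /=; case: eqP => [E|_] /=; first by move: hx; rewrite E; lia.
by move/eqP.
Qed.

Lemma padj_sym n (hn : 3 <= n) (x y : V n) : padj x y = padj y x.
Proof.
rewrite !padjE // eq_sym; congr (_ && _).
by rewrite andbC; case: (_ && _); case: (val x == 0); case: (val y == 0).
Qed.

Lemma sizeP n (s : seq (V n)) : uniq s -> all (fun x : V n => x < gm n) s -> size s <= gm n.
Proof.
move=> us /allP al.
rewrite -(size_map val) -(size_iota 0 (gm n)); apply: uniq_leq_size.
  by rewrite map_inj_uniq //; apply: val_inj.
move=> y /mapP[x xs ->]; rewrite mem_iota /=; exact: al.
Qed.

Lemma internal n (hn : 3 <= n) (u w : V n) s : uniq (u :: rcons s w) ->
  path (@padj n) u (rcons s w) -> all (fun x : V n => x < gm n) s.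
Proof.
move=> us ps; apply/allP => x xs; rewrite ltnNge; apply/negP => hx.
move: us ps; case/splitPr: xs => p1 p2.
rewrite rcons_cat cat_path /= => us /and3P[_ a1 a2].
rewrite padj_sym // in a1.
have h1 := adjH hn a1 hx.
have [a3 m3] : padj x (head w p2) /\ head w p2 \in rcons p2 w.
  by case: p2 {us} a2 => [|y p2] /= /andP[? _]; rewrite ?mem_head.
have h2 := adjH hn a3 hx.
have E : head w p2 = last u p1 by apply: val_inj; rewrite h1 h2.
have : uniq ((u :: p1) ++ (x :: rcons p2 w)) by exact: us.
rewrite cat_uniq => /and3P[_ /hasPn H _].
have := H (head w p2); rewrite inE m3 orbT => /(_ isT).
by rewrite E mem_last.
Qed.

Lemma last_pred n (hn : 3 <= n) (u w : V n) s : path (@padj n) u (rcons s w) ->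
  gm n <= w -> val (last u s) = 0.
Proof.
rewrite rcons_path => /andP[_ a] hw; rewrite padj_sym // in a; exact: adjH a hw.
Qed.

Lemma last_notin (T : eqType) (u : T) s : u \notin s -> last u s = u -> s = [::].
Proof.
case: s => // y r; rewrite inE negb_or => /andP[uy ur] /= E.
by have := mem_last y r; rewrite E inE (negbTE ur) orbF (negbTE uy).
Qed.

Lemma bound_seq n (hn : 3 <= n) (u : V n) s : uniq (u :: s) -> path (@padj n) u s ->
  size s <= (if val u == 0 then gm n - 1 else gm n).
Proof.
have g4 := gm_ge4 hn.
case/lastP: s => [|s' w]; first by [].
rewrite size_rcons => us ps.
have al := internal hn us ps.
have : uniq (rcons (u :: s') w) by exact: us.
rewrite rcons_uniq => /andP[wn /= /andP[un us']].
case: (ltnP u (gm n)) => hu.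
- case: eqP => u0.
  + case: (ltnP w (gm n)) => hw.
    * have := @sizeP n (rcons (u :: s') w).
      rewrite rcons_uniq wn /= un us' size_rcons /= all_rcons hw /= hu al.
      move=> /(_ isT isT); lia.
    * have L := last_pred hn ps hw.
      have E : last u s' = u by apply: val_inj; rewrite L; exact: (esym u0).
      by rewrite (last_notin un E) /=; lia.
  + by have := @sizeP n (u :: s'); rewrite /= un us' hu al => /(_ isT isT).
- have -> : (val u == 0) = false by apply/negbTE; apply/eqP => E; move: hu; rewrite E; lia.
  case: s' us ps al un us' wn => [|y r] us ps al un us' wn; first by rewrite /=; lia.
  move: ps => /= /andP[a1 ps].
  have y0 := adjH hn a1 hu.
  case: (ltnP w (gm n)) => hw.
  + have := @sizeP n (rcons (y :: r) w).
    have wn2 : w \notin y :: r by move: wn; rewrite inE negb_or => /andP[]. 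
    rewrite rcons_uniq wn2 us' size_rcons all_rcons hw al.
    by move=> /(_ isT isT).
  + have L := last_pred hn ps hw.
    move: us' => /= /andP[yr _].
    have E : last y r = y by apply: val_inj; rewrite L; exact: (esym y0).
    by rewrite (last_notin yr E) /=; lia.
Qed.

Lemma bound n (hn : 3 <= n) (u v : V n) k : has_path u v k ->
  k <= (if val u == 0 then gm n - 1 else gm n).
Proof.
case/existsP => t /and3P[us ps _]; rewrite -(size_tuple t); exact: bound_seq.
Qed.

Lemma ecc_ge n (u v : V n) k : k < 2 ^ n -> has_path u v k -> k <= detour_ecc u.
Proof.
move=> hk hp; apply: (@leq_trans (detour_dist u v)); last first.
  by rewrite /detour_ecc; apply: (@leq_bigmax_cond _ predT (fun v => detour_dist u v)).
rewrite /detour_dist.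
exact: (@leq_bigmax_cond _ (fun i : 'I_(2 ^ n) => has_path u v i) (fun i => nat_of_ord i) (Ordinal hk)).
Qed.

Lemma ecc_le n (hn : 3 <= n) (u : V n) :
  detour_ecc u <= (if val u == 0 then gm n - 1 else gm n).
Proof.
apply/bigmax_leqP => v _; apply/bigmax_leqP => k hk; exact: bound hk.
Qed.

Lemma pos2n n : 0 < 2 ^ n. Proof. by rewrite expn_gt0. Qed.
Definition toV n (i : nat) : V n := insubd (Ordinal (pos2n n)) i.
Lemma toVK n i : i < 2 ^ n -> val (toV n i) = i.
Proof. by move=> h; rewrite val_insubd h. Qed.

Lemma mk_path n (u : V n) s : uniq (u :: s) -> path (@padj n) u s ->
  has_path u (last u s) (size s).
Proof.
move=> us ps; apply/existsP; exists (@Tuple (size s) _ s (eqxx _)).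
by apply/and3P; split => //; apply/eqP.
Qed.

Lemma path_P n (hn : 3 <= n) a ns : uniq (a :: ns) -> all (fun i => i < gm n) (a :: ns) ->
  path (@padj n) (toV n a) (map (toV n) ns).
Proof.
have m2 : gm n < 2 ^ n by rewrite (two_n (ltnW (ltnW hn))) ; have := gm_ge4 hn; lia.
elim: ns a => [|y ns IH] a //= /andP[ay /andP[yn un]] /and3P[ha hy hns].
apply/andP; split; last by apply: IH; rewrite /= ?yn ?un ?hy ?hns.
rewrite padjE // !toVK; try lia. rewrite ha hy /= andbT.

apply/eqP => E; have := congr1 val E; rewrite !toVK; try lia.
by move=> E2; rewrite E2 inE eqxx in ay.
Qed.

Lemma uniqV n ns : all (fun i => i < 2 ^ n) ns -> uniq ns -> uniq (map (toV n) ns).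
Proof.
move=> /allP al un; rewrite map_inj_in_uniq // => x y xs ys E.
by rewrite -(toVK (al _ xs)) -(toVK (al _ ys)) E.
Qed.

Lemma m_lt n : 3 <= n -> gm n < 2 ^ n.
Proof. move=> hn; rewrite (two_n (ltnW (ltnW hn))); have := gm_ge4 hn; lia. Qed.

Lemma toV_eq n (u : V n) : u = toV n u.
Proof. by apply: val_inj; rewrite toVK. Qed.

Lemma allV n m ns : m <= 2 ^ n -> all (fun i => i < m) ns -> all (fun i => i < 2 ^ n) ns.
Proof. move=> h /allP al; apply/allP => x /al; lia. Qed.

Lemma iotaE m : 0 < m -> iota 0 m = 0 :: iota 1 (m - 1).
Proof. by case: m => // k _; rewrite subn1. Qed.

Lemma lb0 n (hn : 3 <= n) (u : V n) : val u = 0 -> gm n - 1 <= detour_ecc u.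
Proof.
move=> u0; have g4 := gm_ge4 hn; have m2 := m_lt hn.
have IE := @iotaE (gm n) (ltnW (ltnW (ltnW g4))).
have hu : u = toV n 0 by rewrite (toV_eq u) u0.
have A : all (fun i => i < gm n) (iota 0 (gm n)).
  by apply/allP => x; rewrite mem_iota.
have := @mk_path n u (map (toV n) (iota 1 (gm n - 1))).
rewrite size_map size_iota hu -map_cons -IE.
move=> /(_ _ _)/ecc_ge; apply; first lia.
  by apply: uniqV; [apply: (allV (ltnW m2)) A | apply: iota_uniq].
apply: path_P => //; rewrite -IE //; exact: iota_uniq.
Qed.

Lemma lbH n (hn : 3 <= n) (u : V n) : gm n <= val u -> gm n <= detour_ecc u.
Proof.
move=> hu; have g4 := gm_ge4 hn; have m2 := m_lt hn.
have IE := @iotaE (gm n) (ltnW (ltnW (ltnW g4))).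
have A : all (fun i => i < gm n) (iota 0 (gm n)).
  by apply/allP => x; rewrite mem_iota.
have := @mk_path n u (map (toV n) (iota 0 (gm n))).
rewrite size_map size_iota.
move=> /(_ _ _)/ecc_ge; apply; first lia.
  rewrite /= uniqV ?iota_uniq ?(allV (ltnW m2) A) // andbT.
  apply/mapP => -[x]; rewrite mem_iota => /andP[_ hx] E.
  by move: hu; rewrite E toVK; lia.
rewrite IE /=; apply/andP; split.
  rewrite padjE // toVK; last lia.
  rewrite eqxx !orbT andbT; apply/eqP => E; move: hu; rewrite E toVK; lia.
apply: path_P => //; rewrite -IE //; exact: iota_uniq.
Qed.

Lemma lbP n (hn : 3 <= n) (u : V n) : 0 < val u < gm n -> gm n <= detour_ecc u.
Proof.
move=> /andP[u0 hu]; have g4 := gm_ge4 hn; have m2 := m_lt hn.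
set a := val u.
set ns := filter (predC1 a) (iota 1 (gm n - 1)).
have Uns : uniq ns by rewrite filter_uniq ?iota_uniq.
have Mns : forall x, x \in ns = (x != a) && (0 < x < gm n).
  move=> x; rewrite mem_filter mem_iota /=; congr (_ && _); lia.
have Sns : size ns = gm n - 2.
  have := count_predC (pred1 a) (iota 1 (gm n - 1)).
  rewrite size_iota -!size_filter (filter_pred1_uniq (iota_uniq _ _)); last first.
    rewrite mem_iota; lia.
  rewrite (_ : [seq x <- iota 1 (gm n - 1) | predC (pred1 a) x] = ns) //=; lia.
set s := map (toV n) (rcons (ns ++ [:: 0]) (gm n)).
have U : uniq (u :: s).
  rewrite /s {1}(toV_eq u) -map_cons uniqV //.
    apply/allP => x; rewrite inE mem_rcons !inE mem_cat Mns inE.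
    case/or4P => [/eqP->|/eqP->|/and3P[_ _ hx]|/eqP->]; rewrite /=; try lia.
      exact: ltn_ord.
  change (uniq (a :: rcons (ns ++ [:: 0]) (gm n))).
  rewrite /= mem_rcons inE mem_cat Mns inE eqxx /= rcons_uniq mem_cat Mns inE cat_uniq Uns /= Mns.
  rewrite !negb_or; apply/and4P; split; try (apply/eqP; lia).
have Pp : path (@padj n) u s.
  rewrite /s map_rcons rcons_path; apply/andP; split.
    rewrite {1}(toV_eq u); apply: path_P => //.
      change (uniq (a :: ns ++ [:: 0])).
      rewrite /= mem_cat Mns inE eqxx /= cat_uniq Uns /= Mns !negb_or.
      apply/and3P; split; try (apply/eqP; lia); apply/negP; lia.
    change (all (fun i => i < gm n) (a :: ns ++ [:: 0])).
    apply/allP => x; rewrite inE mem_cat Mns inE.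
    by case/or3P => [/eqP -> | /and3P[_ _ ->] | /eqP ->] //; lia.
  rewrite {1}(toV_eq u) last_map last_cat /=.
  rewrite padjE // !toVK; try lia.
  rewrite eqxx orbT andbT; apply/eqP => E; have := congr1 val E; rewrite !toVK; lia.
have := ecc_ge _ (mk_path U Pp).
rewrite /s size_map size_rcons size_cat Sns addn1 => /(_ ltac:(lia)); lia.
Qed.

Lemma bigmin_le (T : finType) (F : T -> nat) x0 j : \big[minn/x0]_(i : T) F i <= F j.
Proof.
have := mem_index_enum j; elim: (index_enum T) => [|a s IH] //.
rewrite inE big_cons => /orP[/eqP <-|/IH h]; first exact: geq_minl.
exact: leq_trans (geq_minr _ _) h.
Qed.

Theorem mainTheorem10 (n : nat) (hn : 3 <= n) :
  [/\ (forall u : V n, 0 < val u < 2 ^ (n - 1) -> detour_ecc u = 2 ^ (n - 1)),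
      (forall u : V n, val u = 0 -> detour_ecc u = 2 ^ (n - 1) - 1),
      (forall u : V n, 2 ^ (n - 1) <= val u -> detour_ecc u = 2 ^ (n - 1)),
      detour_rad n = 2 ^ (n - 1) - 1
    & detour_diam n = 2 ^ (n - 1)].
Proof.
have g4 := gm_ge4 hn; have m2 := m_lt hn.
change (2 ^ (n - 1)) with (gm n).
have P1 : forall u : V n, 0 < val u < gm n -> detour_ecc u = gm n.
  move=> u hu; have := lbP hn hu; have := ecc_le hn u.
  case/andP: hu => h1 h2.
  rewrite (_ : (val u == 0) = false); last by apply/eqP; lia.
  lia.
have P2 : forall u : V n, val u = 0 -> detour_ecc u = gm n - 1.
  move=> u hu; have := lb0 hn hu; have := ecc_le hn u.
  rewrite hu eqxx; lia.
have P3 : forall u : V n, gm n <= val u -> detour_ecc u = gm n.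
  move=> u hu; have := lbH hn hu; have := ecc_le hn u.
  rewrite (_ : (val u == 0) = false); last by apply/eqP; lia.
  lia.
have Lo : forall u : V n, gm n - 1 <= detour_ecc u.
  move=> u; case: (posnP (val u)) => h0; first by rewrite P2.
  case: (ltnP (val u) (gm n)) => h1; first by rewrite P1 ?h0 ?h1 //; lia.
  rewrite P3 //; lia.
have Hi : forall u : V n, detour_ecc u <= gm n.
  move=> u; have := ecc_le hn u; case: (_ == 0) => //; lia.
have v0 : val (toV n 0) = 0 by rewrite toVK //; lia.
have vm : gm n <= val (toV n (gm n)) by rewrite toVK.
split => //.
- apply/eqP; rewrite eqn_leq; apply/andP; split.
    rewrite -(P2 _ v0); exact: bigmin_le.
  rewrite /detour_rad; apply: (big_ind (fun x => gm n - 1 <= x)) => //.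
    lia.
  by move=> x y hx hy; rewrite leq_min hx hy.
- apply/eqP; rewrite eqn_leq; apply/andP; split.
    by apply/bigmax_leqP => u _; apply: Hi.
  rewrite -{1}(P3 _ vm) /detour_diam.
  exact: (@leq_bigmax_cond _ predT (fun u => detour_ecc u) (toV n (gm n))).
Qed.
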